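(* Let $\rho$ be an increasing continuous function on $[0,\infty)$, continuously differentiable on $(0,\infty)$, with $\lim_{x\to0}\rho'(x)=0$. Then for all sufficiently small positive $x$ and $x^*$ with $x<x^*$, setting $z=(1-\rho(x))e^{ix}$, we have $2|e^{ix^*}-z|\ge\rho(x^* )$. *)

(* Defs.v *)
From Stdlib Require Import Reals.
From Coquelicot Require Export Coquelicot.
Open Scope R_scope.

Definition expi (t : R) : C := (cos t, sin t).

(* Main.v *)
Require Import Defs.
From Stdlib Require Import Reals.
From Coquelicot Require Import Coquelicot.
Open Scope R_scope.

From Stdlib Require Import Lra.

Lemma cmod_bound (r x xs : R) :
  2 * Cmod (Cminus (expi xs) (Cmult (RtoC r) (expi x))) >= (cos (xs - x) - r) + sin (xs - x).
Proof.
  set (z := Cminus (expi xs) (Cmult (RtoC r) (expi x))).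
  assert (Hm : Cmod z ^ 2 = (cos (xs - x) - r)^2 + sin (xs - x) ^2).
  { rewrite Cmod2_alt. unfold z, expi, Cminus, Cmult, RtoC, Re, Im; simpl.
    rewrite cos_minus, sin_minus.
    pose proof (sin2_cos2 x) as E1. pose proof (sin2_cos2 xs) as E2.
    unfold Rsqr in *. ring_simplify. nra. }
  pose proof (Cmod_ge_0 z).
  set (u := cos (xs - x) - r) in Hm |- *. set (v := sin (xs - x)) in Hm |- *.
  set (c := Cmod z) in *.
  assert (Hq : (u+v)^2 <= (2*c)^2) by nra.
  destruct (Rle_or_lt (u+v) 0). lra.
  apply Rle_ge. apply Rsqr_incr_0_var. unfold Rsqr; nra. lra.
Qed.

Lemma trig_bound (a : R) : 0 < a -> a < 1 -> cos a - 1 + sin a >= a / 4.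
Proof.
  intros H0 H1.
  assert (Haa : a*a <= 1) by nra.
  pose proof PI2_1 as HP.
  destruct (SIN a) as [Hs _]; try lra.
  destruct (COS a) as [Hc _]; try lra.
  unfold sin_lb, cos_lb, sin_approx, cos_approx, sin_term, cos_term in *.
  simpl in *.
  assert (Hs' : a - a^3/6 <= sin a).
  { eapply Rle_trans; [|exact Hs]. field_simplify.
    assert (0 <= a^5) by (apply pow_le; lra).
    assert (a^7 <= a^5) by (replace (a^7) with (a^5*(a*a)) by ring; nra). lra. }
  assert (Hc' : 1 - a^2/2 <= cos a).
  { eapply Rle_trans; [|exact Hc]. field_simplify.
    assert (0 <= a^4) by (apply pow_le; lra).
    assert (a^6 <= a^4) by (replace (a^6) with (a^4*(a*a)) by ring; nra). lra. }
  assert (a^3 <= a^2) by (replace (a^3) with (a^2*a) by ring; nra).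
  assert (a^2 <= a) by nra.
  lra.
Qed.

Theorem mainTheorem12 (rho : R -> R)
  (* increasing on [0, oo) *)
  (Hinc : forall x y, 0 <= x -> x < y -> rho x < rho y)
  (* continuous on [0, oo) (one-sided at 0) *)
  (Hcont : forall x, 0 <= x ->
     filterlim rho (within (fun y => 0 <= y) (locally x)) (locally (rho x)))
  (* continuously differentiable on (0, oo) *)
  (Hder : forall x, 0 < x -> ex_derive rho x)
  (Hdercont : forall x, 0 < x -> continuous (Derive rho) x)
  (* lim_{x -> 0+} rho'(x) = 0 *)
  (Hlim0 : filterlim (Derive rho) (at_right 0) (locally 0)) :
  exists delta : R, 0 < delta /\
    forall x xs : R, 0 < x -> x < xs -> xs < delta ->
      2 * Cmod (Cminus (expi xs) (Cmult (RtoC (1 - rho x)) (expi x))) >= rho xs.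
Proof.
  assert (Hl : locally 0 (fun y : R => Rabs (y - 0) < 1/4)).
  { assert (Hq : 0 < 1/4) by lra. exists (mkposreal _ Hq). intros y Hy. exact Hy. }
  specialize (Hlim0 _ Hl). destruct Hlim0 as [d Hd].
  exists (Rmin d 1). split.
  { apply Rmin_pos. apply cond_pos. lra. }
  intros x xs Hx Hxxs Hxs.
  assert (Hd1 : xs < d) by (eapply Rlt_le_trans; [exact Hxs| apply Rmin_l]).
  assert (H1 : xs < 1) by (eapply Rlt_le_trans; [exact Hxs| apply Rmin_r]).
  destruct (MVT_gen rho x xs (Derive rho)) as [c [Hc Heq]].
  { intros y Hy. rewrite Rmin_left in Hy by lra. rewrite Rmax_right in Hy by lra.
    apply Derive_correct. apply Hder. lra. }
  { intros y Hy. rewrite Rmin_left in Hy by lra. rewrite Rmax_right in Hy by lra.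
    apply continuity_pt_filterlim. apply (ex_derive_continuous (K := R_AbsRing) (V := R_NormedModule)). apply Hder. lra. }
  rewrite Rmin_left in Hc by lra. rewrite Rmax_right in Hc by lra.
  assert (Hb : Rabs (Derive rho c - 0) < 1/4).
  { apply Hd. 2: lra. change (Rabs (minus c 0) < d).
    unfold minus, plus, opp; simpl. rewrite Rabs_right by lra. lra. }
  rewrite Rminus_0_r in Hb. apply Rabs_def2 in Hb.
  assert (Hr : rho xs <= rho x + (xs - x)/4).
  { assert (Derive rho c * (xs - x) <= 1/4 * (xs - x)) by (apply Rmult_le_compat_r; lra).
    lra. }
  pose proof (cmod_bound (1 - rho x) x xs) as Hm.
  pose proof (trig_bound (xs - x)) as Ht.
  lra.
Qed.
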